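(* Let $(X_t)$ be a time-homogeneous Markov chain (random walk) on a countable set of sites. Let $S$ be a finite set of occupied sites, let $0$ be a source site, and assume that from any site the walk a.s. eventually leaves any finite set. Let $x\ne y$ be sites not in $S$. Consider the following two procedures. Sequential: particle 1 starts at $0$ and walks until it first visits a site outside $S$, where it sticks. Then particle 2 starts at $0$ and walks until it first visits a site outside the enlarged cluster, where it sticks. Simultaneous: both particles start at $0$ and take steps synchronously, independently. Each particle sticks at the first site it visits that is unoccupied at that moment, and a stuck particle's site becomes occupied immediately. If both particles first reach the same unoccupied site at the same time, particle 1 sticks there and particle 2 continues. Then the probability that the final cluster equals $S\cup\{x,y\}$ is the same under both procedures. Consequently the two procedures yield the same probability distribution of final clusters. *)

(* Defs.v *)
From HB Require Import structures.
From mathcomp Require Import all_boot all_order all_algebra.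
From mathcomp Require Import boolp classical_sets functions cardinality reals
  ereal esum.
Set Implicit Arguments. Unset Strict Implicit. Unset Printing Implicit Defensive.
Import Order.TTheory GRing.Theory Num.Theory.
Local Open Scope classical_set_scope.
Local Open Scope ring_scope.

Section Walks.
Variables (R : realType) (V : countType).

Fixpoint pweight (P : V -> V -> R) (s : seq V) : R :=
  match s with
  | u :: ((v :: _) as t) => P u v * pweight P t
  | _ => 1
  end.

(* p is a walk started at u, staying in A at all times before its last
   step, and whose last site is outside A: i.e. p is the trajectory of the
   walk from u up to (and including) its first visit to the complement of A. *)
Definition exit_path (A : set V) (u : V) (p : seq V) : Prop :=
  [/\ (0 < size p)%N, head u p = u,
      (forall t, (t < (size p).-1)%N -> A (nth u p t)) & ~ A (last u p)].

Definition exit_prob (P : V -> V -> R) (A : set V) (u : V) : \bar R :=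
  \esum_(p in exit_path A u) (pweight P p)%:E.

(* SEQUENTIAL procedure: pairs (p1, p2) of trajectories (particle 1 up to
   sticking, then particle 2 up to sticking), with final cluster C. *)
Definition seq_event (S : set V) (o : V) (C : set V) : set (seq V * seq V) :=
  [set pq | exit_path S o pq.1
          /\ exit_path (S `|` [set last o pq.1]) o pq.2
          /\ S `|` [set last o pq.1; last o pq.2] = C].

Definition seq_prob (P : V -> V -> R) (S : set V) (o : V) (C : set V) : \bar R :=
  \esum_(pq in seq_event S o C) (pweight P pq.1 * pweight P pq.2)%:E.

(* Particle i's trajectory up to its sticking time
   n_i is p_i (so n_i = (size p_i).-1, and particle i sits at nth o p_i t at
   time t <= n_i).  Sites occupied as seen by particle 1 at time t: S and the
   site of particle 2 if it stuck strictly before t (at the same time,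
   particle 1 has priority). *)
Definition occ1 (S : set V) (o : V) (p2 : seq V) (t : nat) : set V :=
  S `|` [set z | ((size p2).-1 < t)%N /\ z = last o p2].

Definition occ2 (S : set V) (o : V) (p1 : seq V) (t : nat) : set V :=
  S `|` [set z | ((size p1).-1 <= t)%N /\ z = last o p1].

Definition sim_valid (S : set V) (o : V) (p1 p2 : seq V) : Prop :=
  [/\ (0 < size p1)%N /\ head o p1 = o,
      (0 < size p2)%N /\ head o p2 = o,
      (forall t, (t < (size p1).-1)%N -> occ1 S o p2 t (nth o p1 t))
        /\ ~ occ1 S o p2 (size p1).-1 (last o p1)
    & (forall t, (t < (size p2).-1)%N -> occ2 S o p1 t (nth o p2 t))
        /\ ~ occ2 S o p1 (size p2).-1 (last o p2)].

Definition sim_event (S : set V) (o : V) (C : set V) : set (seq V * seq V) :=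
  [set pq | sim_valid S o pq.1 pq.2
          /\ S `|` [set last o pq.1; last o pq.2] = C].

(* Independent walkers: the probability of the pair of trajectories is the
   product of the individual weights. *)
Definition sim_prob (P : V -> V -> R) (S : set V) (o : V) (C : set V) : \bar R :=
  \esum_(pq in sim_event S o C) (pweight P pq.1 * pweight P pq.2)%:E.

End Walks.

(* Main.v *)
Require Import Defs.
From HB Require Import structures.
From mathcomp Require Import all_boot all_order all_algebra.
From mathcomp Require Import boolp classical_sets functions cardinality reals
  ereal esum.
From mathcomp Require Import zify.
Import Order.TTheory GRing.Theory Num.Theory.
Local Open Scope classical_set_scope.
Local Open Scope ring_scope.

Section Proof.
Variables (R : realType) (V : countType) (P : V -> V -> R) (S : set V) (o : V).

Definition nS (z : V) : bool := ~~ `[< S z >].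

Lemma nSP z : nS z = true <-> ~ S z.
Proof. rewrite /nS; split => [/negP H Sz|H]; [apply: H; exact/asboolP|by apply/negP => /asboolP]. Qed.

Lemma nSF z : nS z = false -> S z.
Proof. by rewrite /nS => /negbFE/asboolP. Qed.

Lemma find_le (s : seq V) t : (t < size s)%N -> ~ S (nth o s t) -> (find nS s <= t)%N.
Proof.
move=> ts /nSP H; rewrite leqNgt; apply/negP => /(before_find o); by rewrite H.
Qed.

Lemma before (s : seq V) i : (i < find nS s)%N -> S (nth o s i).
Proof. by move=> /(before_find o) /nSF. Qed.

Lemma find_eq (s : seq V) k : (k < size s)%N -> ~ S (nth o s k) ->
  (forall i, (i < k)%N -> S (nth o s i)) -> find nS s = k.
Proof.
move=> ks nk hi; have h1 := @find_le s k ks nk.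
apply/eqP; rewrite eqn_leq h1 /= leqNgt; apply/negP => lt.
have : nS (nth o s (find nS s)) by apply: nth_find; rewrite has_find; lia.
by move=> /nSP; apply; apply: hi.
Qed.

Lemma pweight_cat x (s t : seq V) :
  pweight P (x :: s ++ t) = pweight P (x :: s) * pweight P (last x s :: t).
Proof.
elim: s x => [|y s IH] x; first by rewrite /= mul1r.
have e : forall (a b : V) l, pweight P (a :: b :: l) = P a b * pweight P (b :: l) by [].
by rewrite cat_cons e IH e mulrA.
Qed.

Lemma exitP A (p : seq V) : exit_path A o p -> exists n, [/\ size p = n.+1,
  nth o p 0 = o, forall t, (t < n)%N -> A (nth o p t) & ~ A (nth o p n)].
Proof.
case=> s0 h0 hin hout; exists (size p).-1; split.
- lia.
- by rewrite nth0.
- exact: hin.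
- by rewrite nth_last.
Qed.

Lemma exitI A (p : seq V) n : size p = n.+1 ->
  nth o p 0 = o -> (forall t, (t < n)%N -> A (nth o p t)) -> ~ A (nth o p n) ->
  exit_path A o p.
Proof.
move=> hs h0 hin hout; split.
- by rewrite hs.
- by rewrite -nth0.
- by rewrite hs.
- by rewrite -nth_last hs.
Qed.



Definition base (p1 p2 : seq V) n1 n2 :=
  [/\ size p1 = n1.+1, size p2 = n2.+1, nth o p1 0 = o & nth o p2 0 = o].

Definition seqc C (p1 p2 : seq V) n1 n2 :=
  [/\ (forall t, (t < n1)%N -> S (nth o p1 t)), ~ S (nth o p1 n1),
     (forall t, (t < n2)%N -> S (nth o p2 t) \/ nth o p2 t = nth o p1 n1),
     ~ (S (nth o p2 n2) \/ nth o p2 n2 = nth o p1 n1) &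
     S `|` [set nth o p1 n1; nth o p2 n2] = C].

Definition simc C (p1 p2 : seq V) n1 n2 :=
  [/\ (forall t, (t < n1)%N -> S (nth o p1 t) \/ ((n2 < t)%N /\ nth o p1 t = nth o p2 n2)),
     ~ (S (nth o p1 n1) \/ ((n2 < n1)%N /\ nth o p1 n1 = nth o p2 n2)),
     (forall t, (t < n2)%N -> S (nth o p2 t) \/ ((n1 <= t)%N /\ nth o p2 t = nth o p1 n1)),
     ~ (S (nth o p2 n2) \/ ((n1 <= n2)%N /\ nth o p2 n2 = nth o p1 n1)) &
     S `|` [set nth o p1 n1; nth o p2 n2] = C].

Lemma seqP C p1 p2 : seq_event S o C (p1, p2) -> exists n1 n2,
  base p1 p2 n1 n2 /\ seqc C p1 p2 n1 n2.
Proof.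
move=> [/= E1 [E2 EC]].
have [n1 [hs1 h01 hin1 hout1]] := exitP _ _ E1.
have [n2 [hs2 h02 hin2 hout2]] := exitP _ _ E2.
have la : last o p1 = nth o p1 n1 by rewrite -nth_last hs1.
have lb : last o p2 = nth o p2 n2 by rewrite -nth_last hs2.
rewrite la in hin2 hout2 EC; rewrite lb in EC.
by exists n1, n2; split; split.
Qed.

Lemma seqI C p1 p2 n1 n2 :
  base p1 p2 n1 n2 -> seqc C p1 p2 n1 n2 -> seq_event S o C (p1, p2).
Proof.
move=> [hs1 hs2 h01 h02] [hin1 hout1 hin2 hout2 EC].
have la : last o p1 = nth o p1 n1 by rewrite -nth_last hs1.
have lb : last o p2 = nth o p2 n2 by rewrite -nth_last hs2.
split; [|split] => /=.
- exact: (exitI _ _ _ hs1).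
- by apply: (exitI _ _ _ hs2) => //; rewrite la.
- by rewrite la lb.
Qed.

Lemma simP C p1 p2 : sim_event S o C (p1, p2) -> exists n1 n2,
  base p1 p2 n1 n2 /\ simc C p1 p2 n1 n2.
Proof.
move=> [[[s1 h1] [s2 h2] [hin1 hout1] [hin2 hout2]] /= EC].
rewrite /= in s1 s2 h1 h2 hin1 hout1 hin2 hout2.
exists (size p1).-1, (size p2).-1; rewrite /base /simc !nth_last !nth0; split; split => //.
all: try lia.
Qed.

Lemma simI C p1 p2 n1 n2 :
  base p1 p2 n1 n2 -> simc C p1 p2 n1 n2 -> sim_event S o C (p1, p2).
Proof.
move=> [hs1 hs2 h01 h02] [hin1 hout1 hin2 hout2 EC].
have la : last o p1 = nth o p1 n1 by rewrite -nth_last hs1.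
have lb : last o p2 = nth o p2 n2 by rewrite -nth_last hs2.
split; [split|] => /=.
- by split; rewrite ?hs1 // -nth0.
- by split; rewrite ?hs2 // -nth0.
- by rewrite /occ1 hs1 hs2 lb la /=.
- by rewrite /occ2 hs1 hs2 la lb /=.
- by rewrite la lb.
Qed.


Definition Phi (pq : seq V * seq V) : seq V * seq V :=
  let m := find nS pq.2 in
  if (m < (size pq.1).-1)%N && (nth o pq.2 m == last o pq.1)
  then (pq.1 ++ drop m.+1 pq.2, take m.+1 pq.2) else pq.

Definition Psi (pq : seq V * seq V) : seq V * seq V :=
  let k := find nS pq.1 in
  if (k < (size pq.1).-1)%N
  then (take k.+1 pq.1, pq.2 ++ drop k.+1 pq.1) else pq.

Lemma notS_find (s : seq V) : (find nS s < size s)%N -> ~ S (nth o s (find nS s)).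
Proof. by move=> h; apply/nSP; apply: nth_find; rewrite has_find. Qed.

Lemma Phi_sim C pq : seq_event S o C pq -> sim_event S o C (Phi pq).
Proof.
case: pq => p1 p2 /seqP [n1 [n2 [[hs1 hs2 h01 h02] [hin1 hout1 hin2 hout2 EC]]]].
have nb : ~ S (nth o p2 n2) by move=> h; apply: hout2; left.
have bna : nth o p2 n2 <> nth o p1 n1 by move=> h; apply: hout2; right.
have mle : (find nS p2 <= n2)%N by apply: find_le => //; rewrite hs2.
have la : last o p1 = nth o p1 n1 by rewrite -nth_last hs1.
rewrite /Phi /= hs1 la /=.
set m := find nS p2 in mle *.
have nm : ~ S (nth o p2 m) by apply: notS_find; rewrite hs2; lia.
case: ifP => [/andP [Hm /eqP Ha] | Hc].
- have mlt : (m < n2)%N.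
    by rewrite ltn_neqAle mle andbT; apply/eqP => e; apply: bna; rewrite -e.
  have e1 t : nth o (p1 ++ drop m.+1 p2) t =
     if (t < n1.+1)%N then nth o p1 t else nth o p2 (m.+1 + (t - n1.+1)).
    by rewrite nth_cat nth_drop hs1.
  have e2 t : (t < m.+1)%N -> nth o (take m.+1 p2) t = nth o p2 t.
    by move=> h; rewrite nth_take.
  apply: (@simI C _ _ (n1 + n2 - m) m).
    split.
    + by rewrite size_cat size_drop hs1 hs2; lia.
    + by rewrite size_take hs2; case: ifP => //; lia.
    + by rewrite e1.
    + by rewrite e2.
  split.
  + move=> t ht; rewrite e1 e2 //.
    case: (ltnP t n1.+1) => h1.
      case: (ltnP t n1) => h2; first by left; apply: hin1.
      have -> : t = n1 by lia.
      by right; split => //.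
    have [h|h] := hin2 (m.+1 + (t - n1.+1))%N ltac:(lia); first by left.
    by right; split; [lia | rewrite h].
  + rewrite e1 e2 //.
    have -> : ((n1 + n2 - m < n1.+1)%N = false) by lia.
    have -> : (m.+1 + (n1 + n2 - m - n1.+1) = n2)%N by lia.
    by move=> [//|[_ h]]; apply: bna; rewrite h.
  + move=> t ht; left; rewrite e2; last lia.
    exact: before.
  + rewrite e2 //; move=> [//|[h _]]; lia.
  + rewrite e1 e2 //.
    have -> : ((n1 + n2 - m < n1.+1)%N = false) by lia.
    have -> : (m.+1 + (n1 + n2 - m - n1.+1) = n2)%N by lia.
    by rewrite -EC Ha; congr (S `|` _); exact: setUC.
- apply: (@simI C _ _ n1 n2); first by split.
  split => //.
  + by move=> t ht; left; apply: hin1.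
  + by move=> [//|[_ h]]; apply: bna.
  + move=> t ht; have [h|h] := hin2 t ht; first by left.
    right; split => //; rewrite leqNgt; apply/negP => tn1.
    have mt : (m <= t)%N by apply: find_le; [rewrite hs2; lia | rewrite h].
    have [h'|h'] := hin2 m ltac:(lia); first by [].
    by move: Hc; rewrite h' eqxx andbT; lia.
  + by move=> [//|[_ h]]; apply: bna.
Qed.

Lemma Psi_seq C pq : sim_event S o C pq -> seq_event S o C (Psi pq).
Proof.
case: pq => s1 s2 /simP [n1 [n2 [[hs1 hs2 h01 h02] [hin1 hout1 hin2 hout2 EC]]]].
have na : ~ S (nth o s1 n1) by move=> h; apply: hout1; left.
have nc : ~ S (nth o s2 n2) by move=> h; apply: hout2; left.
have kle : (find nS s1 <= n1)%N by apply: find_le => //; rewrite hs1.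
rewrite /Psi /= hs1 /=.
set k := find nS s1 in kle *.
have nk : ~ S (nth o s1 k) by apply: notS_find; rewrite hs1; lia.
case: ifP => Hk.
- have [//|[n2k ek]] := hin1 k Hk.
  have s2S t : (t < n2)%N -> S (nth o s2 t).
    by move=> ht; have [//|[h _]] := hin2 t ht; lia.
  have e1 t : (t < k.+1)%N -> nth o (take k.+1 s1) t = nth o s1 t.
    by move=> h; rewrite nth_take.
  have e2 t : nth o (s2 ++ drop k.+1 s1) t =
     if (t < n2.+1)%N then nth o s2 t else nth o s1 (k.+1 + (t - n2.+1)).
    by rewrite nth_cat nth_drop hs2.
  apply: (@seqI C _ _ k (n2 + n1 - k)).
    split.
    + by rewrite size_take hs1; case: ifP => //; lia.
    + by rewrite size_cat size_drop hs1 hs2; lia.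
    + by rewrite e1.
    + by rewrite e2.
  split.
  + by move=> t ht; rewrite e1; [exact: before | lia].
  + by rewrite e1.
  + move=> t ht; rewrite e2 e1 //.
    case: (ltnP t n2.+1) => h1.
      case: (ltnP t n2) => h2; first by left; apply: s2S.
      by rewrite (_ : t = n2); [right; rewrite ek | lia].
    have [h|[_ h]] := hin1 (k.+1 + (t - n2.+1))%N ltac:(lia); first by left.
    by right; rewrite h.
  + rewrite e2 e1 //.
    have -> : ((n2 + n1 - k < n2.+1)%N = false) by lia.
    have -> : (k.+1 + (n2 + n1 - k - n2.+1) = n1)%N by lia.
    move=> [//|h]; apply: hout1; right; split; first lia.
    by rewrite h.
  + rewrite e2 e1 //.
    have -> : ((n2 + n1 - k < n2.+1)%N = false) by lia.
    have -> : (k.+1 + (n2 + n1 - k - n2.+1) = n1)%N by lia.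
    by rewrite -EC ek; congr (S `|` _); exact: setUC.
- have ek : k = n1 by move: Hk; lia.
  apply: (@seqI C _ _ n1 n2); first by split.
  split => //.
  + by move=> t ht; apply: before; rewrite -/k ek.
  + by move=> t ht; have [h|[_ h]] := hin2 t ht; [left | right].
  + move=> [//|h]; case: (leqP n1 n2) => h12.
      by apply: hout2; right.
    by apply: hout1; right; split.
Qed.

Lemma PsiPhi C pq : seq_event S o C pq -> Psi (Phi pq) = pq.
Proof.
case: pq => p1 p2 /seqP [n1 [n2 [[hs1 hs2 h01 h02] [hin1 hout1 hin2 hout2 EC]]]].
have nb : ~ S (nth o p2 n2) by move=> h; apply: hout2; left.
have bna : nth o p2 n2 <> nth o p1 n1 by move=> h; apply: hout2; right.
have mle : (find nS p2 <= n2)%N by apply: find_le => //; rewrite hs2.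
have la : last o p1 = nth o p1 n1 by rewrite -nth_last hs1.
have f1 : find nS p1 = n1 by apply: find_eq => //; rewrite hs1.
rewrite /Phi /= hs1 la /=.
set m := find nS p2 in mle *.
case: ifP => [/andP [Hm /eqP Ha] | Hc].
- have mlt : (m < n2)%N.
    by rewrite ltn_neqAle mle andbT; apply/eqP => e; apply: bna; rewrite -e.
  have e1 t : nth o (p1 ++ drop m.+1 p2) t =
     if (t < n1.+1)%N then nth o p1 t else nth o p2 (m.+1 + (t - n1.+1)).
    by rewrite nth_cat nth_drop hs1.
  have f1' : find nS (p1 ++ drop m.+1 p2) = n1.
    apply: find_eq.
    + by rewrite size_cat hs1; lia.
    + by rewrite e1 ltnSn.
    + by move=> i hi; rewrite e1 (_ : (i < n1.+1)%N); [apply: hin1 | lia].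
  rewrite /Psi /= f1' size_cat size_drop hs1 hs2.
  have -> : (n1 < (n1.+1 + (n2.+1 - m.+1)).-1)%N by lia.
  rewrite take_size_cat // drop_size_cat //.
  by rewrite cat_take_drop.
- by rewrite /Psi /= f1 hs1 ltnn.
Qed.

Lemma PhiPsi C pq : sim_event S o C pq -> Phi (Psi pq) = pq.
Proof.
case: pq => s1 s2 /simP [n1 [n2 [[hs1 hs2 h01 h02] [hin1 hout1 hin2 hout2 EC]]]].
have na : ~ S (nth o s1 n1) by move=> h; apply: hout1; left.
have nc : ~ S (nth o s2 n2) by move=> h; apply: hout2; left.
have kle : (find nS s1 <= n1)%N by apply: find_le => //; rewrite hs1.
rewrite /Psi /= hs1 /=.
set k := find nS s1 in kle *.
have nk : ~ S (nth o s1 k) by apply: notS_find; rewrite hs1; lia.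
case: ifP => Hk.
- have [//|[n2k ek]] := hin1 k Hk.
  have s2S t : (t < n2)%N -> S (nth o s2 t).
    by move=> ht; have [//|[h _]] := hin2 t ht; lia.
  have e2 t : nth o (s2 ++ drop k.+1 s1) t =
     if (t < n2.+1)%N then nth o s2 t else nth o s1 (k.+1 + (t - n2.+1)).
    by rewrite nth_cat nth_drop hs2.
  have f2 : find nS (s2 ++ drop k.+1 s1) = n2.
    apply: find_eq.
    + by rewrite size_cat hs2; lia.
    + by rewrite e2 ltnSn.
    + by move=> i hi; rewrite e2 (_ : (i < n2.+1)%N); [apply: s2S | lia].
  have sk : size (take k.+1 s1) = k.+1 by rewrite size_take hs1; case: ifP => //; lia.
  rewrite /Phi /= f2 sk /=.
  have lt : last o (take k.+1 s1) = nth o s1 k.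
    by rewrite -nth_last sk /= nth_take.
  rewrite e2 ltnSn lt ek eqxx n2k /=.
  by rewrite take_size_cat // drop_size_cat // cat_take_drop.
- rewrite /Phi /=.
  have la : last o s1 = nth o s1 n1 by rewrite -nth_last hs1.
  rewrite hs1 la /=.
  set m := find nS s2.
  have mle : (m <= n2)%N by apply: find_le => //; rewrite hs2.
  have nm : ~ S (nth o s2 m) by apply: notS_find; rewrite hs2; lia.
  case: ifP => // /andP [Hm /eqP Ha].
  case: (ltnP m n2) => h.
    by have [//|[h' _]] := hin2 m h; lia.
  have em : m = n2 by lia.
  by exfalso; apply: hout1; right; split; [lia | rewrite -Ha em].
Qed.

Lemma pweight_cat' (s t : seq V) : (0 < size s)%N ->
  pweight P (s ++ t) = pweight P s * pweight P (last o s :: t).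
Proof. by case: s => [//|x s] _; rewrite cat_cons pweight_cat. Qed.

Lemma weight_Phi C pq : seq_event S o C pq ->
  pweight P (Phi pq).1 * pweight P (Phi pq).2 = pweight P pq.1 * pweight P pq.2.
Proof.
case: pq => p1 p2 /seqP [n1 [n2 [[hs1 hs2 h01 h02] [hin1 hout1 hin2 hout2 EC]]]].
have bna : nth o p2 n2 <> nth o p1 n1 by move=> h; apply: hout2; right.
have mle : (find nS p2 <= n2)%N by apply: find_le => //; [rewrite hs2 | move=> h; apply: hout2; left].
have la : last o p1 = nth o p1 n1 by rewrite -nth_last hs1.
rewrite /Phi /= hs1 la /=.
set m := find nS p2 in mle *.
case: ifP => [/andP [Hm /eqP Ha] | Hc] //=.
have mlt : (m < n2)%N.
  by rewrite ltn_neqAle mle andbT; apply/eqP => e; apply: bna; rewrite -e.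
have sk : size (take m.+1 p2) = m.+1 by rewrite size_take hs2; case: ifP => //; lia.
have lt : last o (take m.+1 p2) = nth o p2 m.
  by rewrite -nth_last sk /= nth_take.
rewrite -[in RHS](cat_take_drop m.+1 p2).
rewrite pweight_cat' ?hs1 // pweight_cat' ?sk // la lt Ha.
by rewrite -mulrA [X in _ * X = _]mulrC.
Qed.

Lemma seq_sim C : seq_prob P S o C = sim_prob P S o C.
Proof.
rewrite /seq_prob /sim_prob.
rewrite (reindex_esum (seq_event S o C) (sim_event S o C) Phi).
  apply: eq_esum => pq hpq; by rewrite (weight_Phi _ _ hpq).
split.
- by move=> pq hpq; apply: Phi_sim.
- move=> x y; rewrite !in_setE => hx hy e.
  by rewrite -(PsiPhi _ _ hx) -(PsiPhi _ _ hy) e.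
- move=> y hy; exists (Psi y); first exact: Psi_seq.
  exact: PhiPsi _ _ hy.
Qed.

End Proof.

Theorem mainTheorem8 (R : realType) (V : countType) (P : V -> V -> R)
  (S : set V) (o : V)
  (P_ge0 : forall u v, 0 <= P u v)
  (P_stoch : forall u, \esum_(v in [set: V]) (P u v)%:E = 1%E)
  (P_leaves : forall (F : set V) (u : V), finite_set F -> exit_prob P F u = 1%E)
  (S_fin : finite_set S) :
  (forall x y : V, x <> y -> ~ S x -> ~ S y ->
     seq_prob P S o (S `|` [set x; y]) = sim_prob P S o (S `|` [set x; y]))
  /\ (forall C : set V, seq_prob P S o C = sim_prob P S o C).
Proof.
by split => [x y _ _ _|C]; apply: seq_sim.
Qed.
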